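(* Let $(Q,\mathcal S)$ be a hypergraph with $Q=\{q_1,\dots,q_m\}$ and $\mathcal S=\{S_1,\dots,S_n\}$, where $n\ge 2$, every $S_j$ is a nonempty subset of $Q$, and $S_n=Q$. Let $G'$ be the graph constructed from $(Q,\mathcal S)$ as follows. Its vertex set consists of the vertices $q_1,\dots,q_m$; vertices $S_1,\dots,S_n$; vertices $S_1',\dots,S_n'$; a vertex $q^i_j$ for every pair $(i,j)$ with $q_i\in S_j$ (let $Q'$ be the set of these); and vertices $u_1,v,w,x$. Its edges are: $q^i_jq_i$ and $q^i_jS_j$ for every $q^i_j\in Q'$; $q_iS_j'$ whenever $q_i\in S_j$; $S_jS_k'$ for all $j,k\in\{1,\dots,n\}$; $u_1S_j$ for every $j$; $u_1v$; $wS_j'$ for every $j$; and $xv$, $xw$. Then $(Q,\mathcal S)$ has a $2$-colouring if and only if $G'$ contains the cycle $C_6$ on six vertices as a contraction.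
   Context: A $2$-colouring of a hypergraph $(Q,\mathcal S)$ is a partition $(Q_1,Q_2)$ of $Q$ such that $Q_1\cap S\neq\emptyset$ and $Q_2\cap S\neq\emptyset$ for every $S\in\mathcal S$. Contracting an edge $uv$ means deleting $u$ and $v$ and adding a new vertex adjacent to $(N(u)\cup N(v))\setminus\{u,v\}$ (no multiple edges or loops). A graph contains $H$ as a contraction if $H$ can be obtained from it by a sequence of edge contractions. *)

(* Defs.v *)
From HB Require Import structures.
From mathcomp Require Import all_boot.
Set Implicit Arguments. Unset Strict Implicit. Unset Printing Implicit Defensive.

Record sgraph := SGraph {
  svert : finType;
  sadj : rel svert;
  sadj_sym : symmetric sadj;
  sadj_irr : irreflexive sadj }.

(* Contraction of the edge uv: v is deleted and u plays the role of the
   new vertex, adjacent to (N(u) \cup N(v)) \ {u,v}; no loops/multi-edges. *)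
Section Contract.
Variables (G : sgraph) (u v : svert G).
Definition cvert : finType := {x : svert G | x != v}.
Definition cadj (x y : cvert) : bool :=
  (val x != val y) &&
  [|| @sadj G (val x) (val y),
      (val x == u) && @sadj G v (val y) |
      (val y == u) && @sadj G v (val x)].
Lemma cadj_sym : symmetric cadj.
Proof.
move=> x y; rewrite /cadj eq_sym (@sadj_sym G (val x)); congr (_ && _).
by congr (_ || _); rewrite orbC.
Qed.
Lemma cadj_irr : irreflexive cadj.
Proof. by move=> x; rewrite /cadj eqxx. Qed.
Definition contract : sgraph := SGraph cadj_sym cadj_irr.
End Contract.

Definition sg_iso (G H : sgraph) : Prop :=
  exists f : svert G -> svert H,
    bijective f /\ forall x y, @sadj H (f x) (f y) = @sadj G x y.

Inductive has_contraction : sgraph -> sgraph -> Prop :=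
| hc_iso G H : sg_iso G H -> has_contraction G H
| hc_step G H (u v : svert G) :
    @sadj G u v -> has_contraction (contract u v) H -> has_contraction G H.

Definition c6adj (i j : 'I_6) : bool :=
  ((i.+1 %% 6)%N == j) || ((j.+1 %% 6)%N == i).
Lemma c6adj_sym : symmetric c6adj.
Proof. by move=> i j; rewrite /c6adj orbC. Qed.
Lemma c6adj_irr : irreflexive c6adj.
Proof. by case=> [[|[|[|[|[|[|i]]]]]] Hi] //. Qed.
Definition C6 : sgraph := SGraph c6adj_sym c6adj_irr.

Definition two_colouring m n (S : 'I_n -> {set 'I_m}) (Q1 Q2 : {set 'I_m}) :=
  [/\ Q1 :|: Q2 = setT, Q1 :&: Q2 = set0 &
      forall j, Q1 :&: S j != set0 /\ Q2 :&: S j != set0].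
Definition has_two_colouring m n (S : 'I_n -> {set 'I_m}) :=
  exists Q1 Q2, two_colouring S Q1 Q2.

Inductive ext := EU | EV | EW | EX.
Definition ext_to (e : ext) : 'I_4 :=
  match e with EU => inord 0 | EV => inord 1 | EW => inord 2 | EX => inord 3 end.
Definition ext_of (i : 'I_4) : ext :=
  match val i with 0 => EU | 1 => EV | 2 => EW | _ => EX end.
Lemma ext_toK : cancel ext_to ext_of.
Proof. by case; rewrite /ext_of /= inordK. Qed.
HB.instance Definition _ := Finite.copy ext (can_type ext_toK).

Section Gprime.
Variables (m n : nat) (S : 'I_n -> {set 'I_m}).

Definition qpair : finType := {p : 'I_m * 'I_n | p.1 \in S p.2}.

(* vertices: q_i | S_j | S'_j | q^i_j | u_1, v, w, x *)
Definition gvert : finType := ((('I_m + 'I_n) + ('I_n + qpair)) + ext)%type.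

Definition dedge (a b : gvert) : bool :=
  match a, b with
  | inl (inr (inr p)), inl (inl (inl i)) => (val p).1 == i      (* q^i_j q_i *)
  | inl (inr (inr p)), inl (inl (inr j)) => (val p).2 == j      (* q^i_j S_j *)
  | inl (inl (inl i)), inl (inr (inl j)) => i \in S j           (* q_i S'_j *)
  | inl (inl (inr j)), inl (inr (inl k)) => true                (* S_j S'_k *)
  | inr EU, inl (inl (inr j)) => true                           (* u_1 S_j *)
  | inr EU, inr EV => true                                      (* u_1 v *)
  | inr EW, inl (inr (inl j)) => true                           (* w S'_j *)
  | inr EX, inr EV => true                                      (* x v *)
  | inr EX, inr EW => true                                      (* x w *)
  | _, _ => false
  end.

Definition gadj (a b : gvert) : bool := dedge a b || dedge b a.
Lemma gadj_sym : symmetric gadj.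
Proof. by move=> a b; rewrite /gadj orbC. Qed.
Lemma gadj_irr : irreflexive gadj.
Proof. by move=> a; rewrite /gadj orbb; case: a => [[[i|j]|[j|p]]|[]]. Qed.
Definition Gprime : sgraph := SGraph gadj_sym gadj_irr.
End Gprime.

(* Main.v *)
Require Import Defs.
From HB Require Import structures.
From mathcomp Require Import all_boot.
Set Implicit Arguments. Unset Strict Implicit. Unset Printing Implicit Defensive.

Lemma connect_lift (T U : finType) (h : T -> U) (e : rel T) (e' : rel U) :
  (forall a b, e a b -> connect e' (h a) (h b)) ->
  forall a b, connect e a b -> connect e' (h a) (h b).
Proof.
move=> He a b /connectP [p]; elim: p a => [|c p IH] a /=; first by move=> _ ->.
case/andP=> Hac Hp Hl; exact: connect_trans (He _ _ Hac) (IH _ Hp Hl).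
Qed.

Lemma connect_inv (T : finType) (e : rel T) (P : pred T) :
  (forall a b, e a b -> P a -> P b) -> forall a b, connect e a b -> P a -> P b.
Proof.
move=> He a b /connectP [p]; elim: p a => [|c p IH] a /=; first by move=> _ ->.
case/andP=> Hac Hp Hl Pa; exact: (IH _ Hp Hl (He _ _ Hac Pa)).
Qed.

Lemma connect_exit (T : finType) (e : rel T) (A : pred T) s t :
  connect e s t -> A s -> ~~ A t ->
  exists y z, [/\ connect e s y, A y, ~~ A z & e y z].
Proof.
move/connectP=> [p]; elim: p s => [|c p IH] s /=; first by move=> _ -> ->.
case/andP=> Hsc Hp Hl As At.
case Ac: (A c).
  have [y [z [H1 H2 H3 H4]]] := IH _ Hp Hl Ac At.
  by exists y, z; split=> //; exact: connect_trans (connect1 Hsc) H1.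
by exists s, c; rewrite Ac; split.
Qed.

Definition rf (G : sgraph) (U : finType) (f : svert G -> U) : rel (svert G) :=
  fun x y => @sadj G x y && (f x == f y).

Lemma rf_sym (G : sgraph) (U : finType) (f : svert G -> U) : symmetric (rf f).
Proof. by move=> x y; rewrite /rf sadj_sym eq_sym. Qed.

Lemma connect_rf_eq (G : sgraph) (U : finType) (f : svert G -> U) x y :
  connect (rf f) x y -> f x = f y.
Proof.
move=> C; apply/eqP; apply: (connect_inv (P := fun z => f x == f z)) C _ => //.
by move=> a b /andP [_ /eqP ->].
Qed.

Definition model (G H : sgraph) (f : svert G -> svert H) :=
  [/\ (forall h, exists x, f x = h),
      (forall x y, f x = f y -> connect (rf f) x y),
      (forall x y, @sadj G x y -> f x != f y -> @sadj H (f x) (f y)) &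
      (forall h h', @sadj H h h' -> exists x y, [/\ f x = h, f y = h' & @sadj G x y])].

Section Pi.
Variables (G : sgraph) (u v : svert G).
Hypothesis huv : sadj u v.
Lemma uv_neq : u != v.
Proof. by apply/negP=> /eqP E; move: huv; rewrite E sadj_irr. Qed.
Definition u0 : svert (contract u v) := Sub u uv_neq.
Definition cpi (x : svert G) : svert (contract u v) := insubd u0 x.
Lemma val_cpi x : val (cpi x) = if x != v then x else u.
Proof. by rewrite /cpi val_insubd. Qed.
Lemma cpi_val a : cpi (val a) = a.
Proof. exact: valKd. Qed.
Lemma cpi_v : cpi v = u0.
Proof. by apply: val_inj; rewrite val_cpi eqxx. Qed.
Lemma cpi_u : cpi u = u0.
Proof. by apply: val_inj; rewrite val_cpi uv_neq. Qed.
Lemma L1 x y : sadj x y -> cpi x != cpi y -> @sadj (contract u v) (cpi x) (cpi y).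
Proof.
move=> Hxy Hne; rewrite /= /cadj.
have -> : val (cpi x) != val (cpi y) by apply: contra Hne => /eqP /val_inj ->.
rewrite /= !val_cpi.
case: (eqVneq x v) => [Ex|Nx]; case: (eqVneq y v) => [Ey|Ny] /=.
- by move: Hne; rewrite Ex Ey eqxx.
- by subst x; rewrite eqxx Hxy orbT.
- by subst y; rewrite eqxx /= [sadj v x]sadj_sym Hxy !orbT.
- by rewrite Hxy.
Qed.
End Pi.

Lemma contraction_model (G H : sgraph) :
  has_contraction G H -> exists f : svert G -> svert H, model f.
Proof.
elim=> {G H}.
- move=> G H [f [[g fg gf] Hadj]]; exists f; split.
  + by move=> h; exists (g h).
  + by move=> x y /(can_inj fg) ->; exact: connect0.
  + by move=> x y Hxy _; rewrite Hadj.
  + by move=> h h' Hh; exists (g h), (g h'); rewrite !gf -Hadj !gf.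
- move=> G H u v huv _ [g [gs gc ge gr]].
  pose f x := g (cpi huv x).
  have fval : forall a, f (val a) = g a by move=> a; rewrite /f cpi_val.
  have fuv : f v = f u by rewrite /f cpi_v cpi_u.
  have Hl : forall a b, rf g a b -> connect (rf f) (val a) (val b).
    move=> a b /andP [Hab /eqP Eg]; move: Hab; rewrite /= /cadj.
    case/andP=> _ /or3P [H1|/andP [/eqP Ea H1]|/andP [/eqP Eb H1]].
    + by apply: connect1; rewrite /rf H1 !fval Eg eqxx.
    + apply: (@connect_trans _ _ v).
        by apply: connect1; rewrite /rf Ea huv fuv eqxx.
      by apply: connect1; rewrite /rf H1 fuv -Ea fval Eg fval eqxx.
    + apply: (@connect_trans _ _ v).
        by apply: connect1; rewrite /rf sadj_sym H1 fuv -Eb !fval Eg eqxx.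
      by apply: connect1; rewrite /rf Eb sadj_sym huv fuv eqxx.
  have Hx : forall x, connect (rf f) x (val (cpi huv x)).
    move=> x; rewrite val_cpi; case: (eqVneq x v) => [->|] //=.
    by apply: connect1; rewrite /rf sadj_sym huv fuv eqxx.
  exists f; split.
  + move=> h; have [a <-] := gs h; exists (val a); exact: fval.
  + move=> x y Exy.
    have C := connect_lift Hl (gc _ _ Exy).
    apply: connect_trans (Hx x) _; apply: connect_trans C _.
    by rewrite (sym_connect_sym (@rf_sym _ _ f)); exact: Hx.
  + move=> x y Hxy Hne; apply: ge => //.
    apply: L1 => //; by apply: contra Hne => /eqP; rewrite /f => ->.
  + move=> h h' /gr [a [b [<- <- Hab]]].
    move: Hab; rewrite /= /cadj.
    case/andP=> _ /or3P [H1|/andP [/eqP Ea H1]|/andP [/eqP Eb H1]].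
    * by exists (val a), (val b); rewrite !fval.
    * exists v, (val b); rewrite fuv -Ea !fval; split=> //.
    * exists (val a), v; rewrite fuv -Eb !fval; split=> //.
      by rewrite sadj_sym.
Qed.

Lemma model_inj (G H : sgraph) (f : svert G -> svert H) :
  model f -> injective f -> has_contraction G H.
Proof.
move=> [fs fc fe fr] finj; apply: hc_iso; exists f.
have ex : forall h, exists x, f x == h by move=> h; have [x <-] := fs h; exists x.
pose g h := xchoose (ex h).
have fg : cancel g f by move=> h; exact: (eqP (xchooseP (ex h))).
have gf : cancel f g by move=> x; apply: finj; rewrite fg.
split; first exact: (Bijective gf fg).
move=> x y; case: (eqVneq x y) => [->|Nxy]; first by rewrite !sadj_irr.
have Nf : f x != f y by apply: contra Nxy => /eqP /finj ->.
apply/idP/idP; last by move=> Hxy; exact: fe.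
by case/fr=> x' [y' [/finj -> /finj -> ->]].
Qed.

Lemma model_step (G H : sgraph) (f : svert G -> svert H) x y :
  model f -> x != y -> f x = f y ->
  exists u v (huv : @sadj G u v) (g : svert (contract u v) -> svert H), model g.
Proof.
move=> [fs fc fe fr] Nxy Exy.
have Hy : ~~ pred1 x y by rewrite /= eq_sym.
have [u [v [_ /eqP Au Av /andP [huv /eqP fuv]]]] :=
  connect_exit (A := pred1 x) (fc _ _ Exy) (eqxx x) Hy.
subst u.
exists x; exists v; exists huv; exists (fun a : svert (contract x v) => f (val a)).
have fpi : forall z, f (val (cpi huv z)) = f z.
  by move=> z; rewrite val_cpi; case: (eqVneq z v) => [->|].
split.
- by move=> h; have [z <-] := fs h; exists (cpi huv z).
- move=> a b Eab; rewrite -(cpi_val huv a) -(cpi_val huv b).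
  apply: (connect_lift (e := rf f)) (fc _ _ Eab) => p q /andP [Hpq /eqP Epq].
  case: (eqVneq (cpi huv p) (cpi huv q)) => [->|Npq]; first exact: connect0.
  by apply: connect1; rewrite /rf L1 //= !fpi Epq eqxx.
- move=> a b /=; rewrite /cadj.
  case/andP=> _ /or3P [H1|/andP [/eqP Ea H1]|/andP [/eqP Eb H1]] Hne.
  + exact: fe.
  + by move: Hne; rewrite /= Ea fuv => Hne; exact: fe.
  + by move: Hne; rewrite /= Eb fuv => Hne; apply: fe; rewrite 1?sadj_sym.
- move=> h h' Hh; have [p [q [Ep Eq Hpq]]] := fr _ _ Hh.
  exists (cpi huv p), (cpi huv q); rewrite !fpi; split=> //.
  apply: L1 => //; apply: contraTneq Hh => E.
  by rewrite -Ep -Eq -(fpi p) -(fpi q) E sadj_irr.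
Qed.

Lemma model_contraction (G H : sgraph) (f : svert G -> svert H) :
  model f -> has_contraction G H.
Proof.
move: {2}#|svert G| (leqnn #|svert G|) => N.
elim: N G f => [|N IH] G f HN Hf.
- apply: (model_inj Hf) => x; move: HN; rewrite leqn0 => /eqP /card0_eq /(_ x).
  by rewrite inE.
- case: (boolP (injectiveb f)) => [/injectiveP|/injectivePn [x [y Nxy Exy]]].
    exact: model_inj.
  have [u [v [huv [g Hg]]]] := model_step Hf Nxy Exy.
  apply: (hc_step huv); apply: (IH _ g) => //.
  rewrite /= /cvert card_sig.
  have -> : #|[pred z | z != v]| = #|predC1 v| by apply: eq_card.
  rewrite cardC1; move: HN; have : 0 < #|svert G| by apply/card_gt0P; exists u.
  by case: #|svert G|.
Qed.

Definition nearb (a b : nat) := [|| a == b, (a.+1 %% 6) == b | (b.+1 %% 6) == a].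
Definition I6 := iota 0 6.
Definition bl6 : seq (seq bool) :=
  iter 6 (fun L => flatten [seq [:: false :: l; true :: l] | l <- L]) [:: [::]].
Definition inP (P : seq bool) k := nth false P k.
Definition hypP (fu : nat) P := has (inP P) I6 && all (fun p => inP P p ==> nearb fu p) I6.
Definition cross P P' := all (fun p => all (fun p' => (inP P p && inP P' p') ==> nearb p p') I6) I6.
Definition surj fu fv fx fw P P' :=
  all (fun k => [|| k == fu, k == fv, k == fx, k == fw |
                has (fun p => (inP P p || inP P' p) && nearb p k) I6]) I6.
Definition concl (fu fw : nat) P P' :=
  has (fun a => has (fun b => all (fun k => inP P k ==> (k == a)) I6 &&
      all (fun k => inP P' k ==> (k == b)) I6 && (a != b) && (fu != a) && (fw != b)) I6) I6.
Definition checker :=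
 all (fun fu => all (fun fv => if nearb fu fv then
  all (fun fx => if nearb fv fx then all (fun fw => if nearb fx fw then
  all (fun P => if hypP fu P then
  all (fun P' => if hypP fw P' && cross P P' && surj fu fv fx fw P P'
   then concl fu fw P P' else true) bl6 else true) bl6 else true) I6 else true) I6 else true) I6) I6.
Lemma checker_ok : checker = true.
Proof. vm_compute. reflexivity. Qed.

Lemma in_bl6 s : size s = 6 -> s \in bl6.
Proof.
rewrite /bl6; elim: 6 s => [|n IH] [|b s] //= [Hs].
apply/flatten_mapP; exists s; first exact: IH.
by case: b; rewrite !inE eqxx ?orbT.
Qed.

Lemma checker_sound fu fv fx fw P P' : fu < 6 -> fv < 6 -> fx < 6 -> fw < 6 ->
  size P = 6 -> size P' = 6 -> nearb fu fv -> nearb fv fx -> nearb fx fw ->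
  hypP fu P -> hypP fw P' -> cross P P' -> surj fu fv fx fw P P' ->
  concl fu fw P P'.
Proof.
move=> Hu Hv Hx Hw /in_bl6 HP /in_bl6 HP' Nuv Nvx Nxw hP hP' cr su.
have := checker_ok; rewrite /checker.
move/allP/(_ fu); rewrite mem_iota => /(_ Hu).
move/allP/(_ fv); rewrite mem_iota Nuv => /(_ Hv).
move/allP/(_ fx); rewrite mem_iota Nvx => /(_ Hx).
move/allP/(_ fw); rewrite mem_iota Nxw => /(_ Hw).
move/allP/(_ P HP); rewrite hP.
by move/allP/(_ P' HP'); rewrite hP' cr su.
Qed.

Section Main.
Variables (m n : nat) (S : 'I_n -> {set 'I_m}).
Hypothesis n2 : (2 <= n)%N.
Hypothesis Slast : forall j : 'I_n, nat_of_ord j = n.-1 -> S j = setT.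

Lemma n0 : 0 < n. Proof. exact: leq_trans _ n2. Qed.
Lemma nl : n.-1 < n. Proof. by rewrite ltn_predL n0. Qed.
Definition jl : 'I_n := Ordinal nl.
Definition j0 : 'I_n := Ordinal n0.
Lemma Sjl i : i \in S jl.
Proof. by rewrite Slast ?inE. Qed.

Definition qv i : gvert S := inl (inl (inl i)).
Definition Sv j : gvert S := inl (inl (inr j)).
Definition Sv' j : gvert S := inl (inr (inl j)).
Definition pv p : gvert S := inl (inr (inr p)).
Definition ev e : gvert S := inr e.
Definition mkp i j (H : i \in S j) : qpair S := exist (fun p => p.1 \in S p.2) (i, j) H.

Definition hub (h : 'I_6) : gvert S :=
  match val h with 0 => ev EX | 1 => ev EV | 2 => ev EU | 3 => Sv jl | 4 => Sv' jl | _ => ev EW end.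

Lemma hub_adj h h' : c6adj h h' -> gadj (hub h) (hub h').
Proof.
by case: h => [[|[|[|[|[|[|k]]]]]] Hk] //; case: h' => [[|[|[|[|[|[|k']]]]]] Hk'].
Qed.

Section Fwd.
Variables Q1 Q2 : {set 'I_m}.
Hypothesis col : two_colouring S Q1 Q2.

Definition o0 : 'I_6 := @Ordinal 6 0 isT.
Definition o1 : 'I_6 := @Ordinal 6 1 isT.
Definition o2 : 'I_6 := @Ordinal 6 2 isT.
Definition o3 : 'I_6 := @Ordinal 6 3 isT.
Definition o4 : 'I_6 := @Ordinal 6 4 isT.
Definition o5 : 'I_6 := @Ordinal 6 5 isT.

Definition ff (y : gvert S) : svert C6 :=
  match y with
  | inl (inl (inl i)) => if i \in Q1 then o3 else o4
  | inl (inl (inr _)) => o3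
  | inl (inr (inl _)) => o4
  | inl (inr (inr _)) => o3
  | inr EU => o2 | inr EV => o1 | inr EW => o5 | inr EX => o0 end.

Lemma ff_hub h : ff (hub h) = h.
Proof.
by apply: val_inj; case: h => [[|[|[|[|[|[|k]]]]]] Hk].
Qed.

Let G := Gprime S.
Let R := @rf G (svert C6) ff.

Lemma q_hub i : connect R (qv i) (hub (ff (qv i))).
Proof.
rewrite /=; case Hi: (i \in Q1).
  apply: (@connect_trans _ _ (pv (mkp (Sjl i)))); apply: connect1;
  by rewrite /R /rf /= /gadj /= ?Hi ?eqxx.
by apply: connect1; rewrite /R /rf /= /gadj /= Hi Sjl.
Qed.

Lemma ff_model : @model (Gprime S) C6 ff.
Proof.
case: col => HU HI HS.
have Rsym : connect_sym R by apply: sym_connect_sym; exact: rf_sym.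
have Hall : forall y, connect R y (hub (ff y)).
  have Sc : forall j, connect R (Sv j) (hub (ff (Sv j))).
    move=> j; have [/set0Pn [i]] := HS j; rewrite inE => /andP [iQ iS] _.
    apply: (@connect_trans _ _ (pv (mkp iS))); first by apply: connect1; rewrite /R /rf /= /gadj /= !eqxx.
    apply: (@connect_trans _ _ (qv i)); first by apply: connect1; rewrite /R /rf /= /gadj /= iQ !eqxx.
    by have := q_hub i; rewrite /= iQ.
  case=> [[[i|j]|[j|p]]|[]].
  - exact: q_hub.
  - exact: Sc.
  - have [_ /set0Pn [i]] := HS j; rewrite inE => /andP [iQ iS].
    have iQ1 : i \notin Q1.
      by apply/negP=> iQ1; have := in_set0 i; rewrite -HI inE iQ1 iQ.
    apply: (@connect_trans _ _ (qv i)); first by apply: connect1; rewrite /R /rf /= /gadj /= iS (negbTE iQ1).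
    by have := q_hub i; rewrite /= (negbTE iQ1).
  - apply: (@connect_trans _ _ (Sv (val p).2)); first by apply: connect1; rewrite /R /rf /= /gadj /= !eqxx.
    exact: Sc.
  - exact: connect0.
  - exact: connect0.
  - exact: connect0.
  - exact: connect0.
split.
- by move=> h; exists (hub h); exact: ff_hub.
- move=> x y Exy; apply: connect_trans (Hall x) _.
  by rewrite Rsym Exy; exact: Hall.
- case=> [[[i|j]|[j|p]]|[]]; case=> [[[i'|j']|[j'|p']]|[]] //=;
  rewrite /gadj /= ?orbF //; repeat case: (_ \in Q1) => //.
- move=> h h' Hh; exists (hub h), (hub h'); rewrite !ff_hub; split=> //.
  exact: hub_adj.
Qed.
End Fwd.

Definition insideS j (y : gvert S) : bool :=
  match y with inl (inl (inr j')) => j' == j | inl (inr (inr p)) => (val p).2 == j | _ => false end.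

Lemma jl_j0 : jl != j0.
Proof. apply/eqP => /(congr1 val) /=; move: n2; by case: n => [|[|k]]. Qed.

Section Bwd.
Variable f : gvert S -> 'I_6.
Hypothesis Hf : @model (Gprime S) C6 f.

Lemma bwd : has_two_colouring S.
Proof.
case: Hf => fs fc fe fr.
have near_e : forall y z, gadj y z -> nearb (f y) (f z).
  move=> y z Hyz; rewrite /nearb; case: (eqVneq (f y) (f z)) => [->|Ne]; first by rewrite eqxx.
  by have := fe _ _ Hyz Ne; rewrite /= /c6adj => ->; rewrite orbT.
pose PL := [seq [exists j, val (f (Sv j)) == k] | k <- I6].
pose PL' := [seq [exists j, val (f (Sv' j)) == k] | k <- I6].
have inPL : forall k, k < 6 -> inP PL k = [exists j, val (f (Sv j)) == k].
  by move=> k Hk; rewrite /inP (nth_map 0) ?size_iota // nth_iota.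
have inPL' : forall k, k < 6 -> inP PL' k = [exists j, val (f (Sv' j)) == k].
  by move=> k Hk; rewrite /inP (nth_map 0) ?size_iota // nth_iota.
have := @checker_sound (f (ev EU)) (f (ev EV)) (f (ev EX)) (f (ev EW)) PL PL'
  (ltn_ord _) (ltn_ord _) (ltn_ord _) (ltn_ord _).
rewrite !size_map !size_iota => /(_ erefl erefl).
rewrite !near_e // => /(_ erefl erefl erefl).
have hP : hypP (f (ev EU)) PL.
  apply/andP; split.
    apply/hasP; exists (val (f (Sv j0))); first by rewrite /I6 mem_iota ltn_ord.
    by rewrite inPL ?ltn_ord //; apply/existsP; exists j0.
  apply/allP=> p; rewrite /I6 mem_iota => /andP [_ Hp]; rewrite inPL //.
  by apply/implyP=> /existsP [j /eqP <-]; apply: near_e.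
have hP' : hypP (f (ev EW)) PL'.
  apply/andP; split.
    apply/hasP; exists (val (f (Sv' j0))); first by rewrite /I6 mem_iota ltn_ord.
    by rewrite inPL' ?ltn_ord //; apply/existsP; exists j0.
  apply/allP=> p; rewrite /I6 mem_iota => /andP [_ Hp]; rewrite inPL' //.
  by apply/implyP=> /existsP [j /eqP <-]; apply: near_e.
have cr : cross PL PL'.
  apply/allP=> p; rewrite /I6 mem_iota => /andP [_ Hp].
  apply/allP=> p'; rewrite /I6 mem_iota => /andP [_ Hp']; rewrite inPL // inPL' //.
  by apply/implyP=> /andP [/existsP [j /eqP <-] /existsP [j' /eqP <-]]; apply: near_e.
have su : surj (f (ev EU)) (f (ev EV)) (f (ev EX)) (f (ev EW)) PL PL'.
  apply/allP=> k; rewrite /I6 mem_iota => /andP [_ Hk].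
  have [z Ez] := fs (Ordinal Hk).
  have Ek : k = val (f z) by rewrite Ez.
  move: Ez Ek; case: z => [[[i|j]|[j|p]]|[]] _ -> ; rewrite ?eqxx ?orbT //;
    do 4 (apply/orP; right); apply/hasP.
  - exists (val (f (Sv' jl))); first by rewrite /I6 mem_iota ltn_ord.
    apply/andP; split; first by apply/orP; right; rewrite inPL' ?ltn_ord //; apply/existsP; exists jl.
    by apply: near_e; rewrite /gadj /= Sjl.
  - exists (val (f (Sv j))); first by rewrite /I6 mem_iota ltn_ord.
    apply/andP; split; first by apply/orP; left; rewrite inPL ?ltn_ord //; apply/existsP; exists j.
    by rewrite /nearb eqxx.
  - exists (val (f (Sv' j))); first by rewrite /I6 mem_iota ltn_ord.
    apply/andP; split; first by apply/orP; right; rewrite inPL' ?ltn_ord //; apply/existsP; exists j.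
    by rewrite /nearb eqxx.
  - exists (val (f (Sv (val p).2))); first by rewrite /I6 mem_iota ltn_ord.
    apply/andP; split; first by apply/orP; left; rewrite inPL ?ltn_ord //; apply/existsP; exists (val p).2.
    by apply: near_e; rewrite /gadj /= eqxx.
move=> /(_ hP hP' cr su) /hasP [a _] /hasP [b _] /andP [/andP [/andP [/andP [Ha Hb] ab] ua] wb].
have fa : forall j, val (f (Sv j)) = a.
  move=> j; apply/eqP; move/allP: Ha => /(_ (val (f (Sv j)))); rewrite /I6 mem_iota ltn_ord.
  by rewrite inPL ?ltn_ord // => /(_ erefl) /implyP; apply; apply/existsP; exists j.
have fb : forall j, val (f (Sv' j)) = b.
  move=> j; apply/eqP; move/allP: Hb => /(_ (val (f (Sv' j)))); rewrite /I6 mem_iota ltn_ord.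
  by rewrite inPL' ?ltn_ord // => /(_ erefl) /implyP; apply; apply/existsP; exists j.

have fyeq : forall y z : gvert S, connect (@rf (Gprime S) _ f) y z -> val (f z) = val (f y).
  by move=> y z /(@connect_rf_eq (Gprime S)) ->.
have j2P : forall j : 'I_n, exists j2, j2 != j.
  move=> j; case: (eqVneq j jl) => [->|Nj]; last by exists jl; rewrite eq_sym.
  by exists j0; rewrite eq_sym jl_j0.
have HA : forall j, exists2 i, i \in S j & val (f (qv i)) = a.
  move=> j; have [j2 Nj2] := j2P j.
  have E : f (Sv j) = f (Sv j2) by apply: val_inj; rewrite !fa.
  have Aj2 : ~~ insideS j (Sv j2) by [].
  have [y [z [Cy Ay Az /andP [Hyz /eqP Eyz]]]] :=
    connect_exit (A := insideS j) (fc _ _ E) (eqxx j) Aj2.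
  have fy := fyeq _ _ Cy; rewrite fa in fy.
  move: Ay Az Hyz Eyz fy; clear Cy; case: y => [[[i|j']|[j'|p]]|[]] //= Ay.
  - move/eqP: Ay => ->; case: z => [[[i'|j'']|[j''|p']]|[]] //=; rewrite /gadj /= ?orbF.
    + by move=> _ _ E' D; move: ab; rewrite -D E' fb eqxx.
    + by move=> Az Hyz; rewrite Hyz in Az.
    + by move=> _ _ E' D; move: ua; rewrite -D -E' eqxx.
  - case: z => [[[i'|j'']|[j''|p']]|[]] //=; rewrite /gadj /= ?orbF.
    + move=> _ /eqP Ei' E' fy; exists i'; last by rewrite -E'.
      by rewrite -Ei' -(eqP Ay); exact: (valP p).
    + by move=> Az /eqP E'; move: Az; rewrite -E' Ay.
have HB : forall j, exists2 i, i \in S j & val (f (qv i)) = b.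
  move=> j; have [j2 Nj2] := j2P j.
  have E : f (Sv' j) = f (Sv' j2) by apply: val_inj; rewrite !fb.
  have Aj2 : ~~ pred1 (Sv' j) (Sv' j2).
    by apply/negP => /eqP [E']; move: Nj2; rewrite E' eqxx.
  have [y [z [Cy /eqP Ay Az /andP [Hyz /eqP Eyz]]]] :=
    connect_exit (A := pred1 (Sv' j)) (fc _ _ E) (eqxx _) Aj2.
  subst y; have fy := fyeq _ _ Cy; rewrite fb in fy.
  move: Az Hyz Eyz fy; clear Cy; case: z => [[[i'|j'']|[j''|p']]|[]] //=; rewrite /gadj /= ?orbF.
  - by move=> _ Hi E' _; exists i' => //; rewrite -E' fb.
  - by move=> _ _ E' _; move: ab; rewrite -(fb j) E' fa eqxx.
  - by move=> _ _ E' _; move: wb; rewrite -(fb j) -E' eqxx.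
exists [set i | val (f (qv i)) == a], (~: [set i | val (f (qv i)) == a]).
split; [exact: setUCr | exact: setICr | move=> j; split].
- have [i iS fi] := HA j; apply/set0Pn; exists i; by rewrite !inE fi eqxx iS.
- have [i iS fi] := HB j; apply/set0Pn; exists i; by rewrite !inE fi eq_sym ab iS.
Qed.
End Bwd.
End Main.

Theorem lemma6 (m n : nat) (S : 'I_n -> {set 'I_m}) :
  (2 <= n)%N ->
  injective S ->
  (forall j, S j != set0) ->
  (forall j : 'I_n, nat_of_ord j = n.-1 -> S j = setT) ->
  has_two_colouring S <-> has_contraction (Gprime S) C6.
Proof.
move=> n2 _ _ Slast; split.
- case=> Q1 [Q2 col]; apply: model_contraction; exact: (ff_model n2 Slast col).
- move/contraction_model => [f Hf]; exact: (bwd n2 Slast Hf).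
Qed.
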